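(* Let $P=\{p_1,\dots,p_d\}$ be a maximal ranked poset of rank $n$, with rank levels $P_0,\dots,P_n$. (a) Let $I$ and $J$ be poset ideals of $P$ with $I\neq J$. Then $\{I,J\}\in E^{*}_{\mathcal O(P)}$ if and only if $I=\emptyset$, $J$ is connected in $P$, and $|\max(J)|\ge 2$. (b) Let $A$ and $B$ be antichains of $P$ with $A\neq B$. Then $\{A,B\}\in E^{*}_{\mathcal C(P)}$ if and only if there exists some $\ell$ with $1\le \ell\le n$ such that $A=P_{\ell-1}$, $B\subset P_\ell$, and $|B|\ge 2$.
   Context: For a finite poset $P=\{p_1,\dots,p_d\}$ and $W\subset P$ put $\rho(W)=\sum_{p_i\in W}\mathbf e_i\in\mathbb R^d$ ($\rho(\emptyset)=0$). The order polytope is $\mathcal O(P)=\{x\in\mathbb R^d: 0\le x_i\le 1 \text{ for all } i,\ x_i\ge x_j \text{ if } p_i\le p_j\}$ and the chain polytope is $\mathcal C(P)=\{x\in\mathbb R^d: x_i\ge 0 \text{ for all } i,\ x_{i_1}+\dots+x_{i_k}\le 1 \text{ if } p_{i_1}<\dots<p_{i_k}\}$. Poset ideals and antichains include $\emptyset$. For a poset ideal $I$, $\max(I)$ is its set of maximal elements; for an antichain $A$, $\langle A\rangle=\{x: x\le p \text{ for some } p\in A\}$. A nonempty subset $Q\subset P$ is connected in $P$ if the induced subgraph of the comparability graph of $P$ on $Q$ is connected. $E^{*}_{\mathcal O(P)}$ is the set of pairs $\{I,J\}$ of distinct poset ideals such that $\mathrm{conv}\{\rho(I),\rho(J)\}$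 is an edge of $\mathcal O(P)$ but $\mathrm{conv}\{\rho(\max I),\rho(\max J)\}$ is not an edge of $\mathcal C(P)$. $E^{*}_{\mathcal C(P)}$ is the set of pairs $\{A,B\}$ of distinct antichains such that $\mathrm{conv}\{\rho(A),\rho(B)\}$ is an edge of $\mathcal C(P)$ but $\mathrm{conv}\{\rho(\langle A\rangle),\rho(\langle B\rangle)\}$ is not an edge of $\mathcal O(P)$. The length of a chain $C$ is $|C|-1$; $P$ is graded of rank $n$ if every maximal chain has length $n$, and then $P=\bigcup_{i=0}^n P_i$ where every maximal chain is $p_0<p_1<\dots<p_n$ with $p_i\in P_i$ ($P_i$ = elements of rank $i$). $P$ is a maximal ranked poset if it is graded and any two elements of distinct ranks are comparable. *)

(* Defs.v *)
From HB Require Import structures.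
From mathcomp Require Import all_boot all_order all_algebra.
From mathcomp Require Import reals.

Set Implicit Arguments.
Unset Strict Implicit.
Unset Printing Implicit Defensive.

Import Order.Theory GRing.Theory Num.Theory.

Section PosetDefs.
Context {disp : Order.disp_t} {T : finPOrderType disp}.

Definition is_chain (C : {set T}) : Prop :=
  forall x y, x \in C -> y \in C -> (x >=< y)%O.

Definition is_max_chain (C : {set T}) : Prop :=
  is_chain C /\ forall D : {set T}, is_chain D -> C \subset D -> D = C.

Definition is_antichain (A : {set T}) : Prop :=
  forall x y, x \in A -> y \in A -> (x <= y)%O -> x = y.

Definition is_ideal (I : {set T}) : Prop :=
  forall x y, y \in I -> (x <= y)%O -> x \in I.

Definition maxel (I : {set T}) : {set T} :=
  [set x in I | [forall y in I, (x <= y)%O ==> (y == x)]].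

Definition down (A : {set T}) : {set T} :=
  [set x | [exists y in A, (x <= y)%O]].

Definition comp_rel (Q : {set T}) : rel T :=
  fun x y => [&& x \in Q, y \in Q & (x >=< y)%O].

Definition connected_in (Q : {set T}) : Prop :=
  Q != set0 /\ forall x y, x \in Q -> y \in Q -> connect (comp_rel Q) x y.

(* graded of rank n: every maximal chain has length n (i.e. n+1 elements) *)
Definition graded (n : nat) : Prop :=
  forall C : {set T}, is_max_chain C -> #|C| = n.+1.

Definition chainb (C : {set T}) : bool :=
  [forall x in C, forall y in C, (x >=< y)%O].

Definition rank (x : T) : nat :=
  (\max_(C : {set T} | chainb C && [forall y in C, (y <= x)%O]) #|C|).-1.

Definition level (i : nat) : {set T} := [set x | rank x == i].

Definition max_ranked (n : nat) : Prop :=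
  graded n /\ forall x y, rank x != rank y -> (x >=< y)%O.

End PosetDefs.

Section Polytopes.
Context {R : realType} {disp : Order.disp_t} {T : finPOrderType disp}.
Local Open Scope ring_scope.

(* points of R^d are functions T -> R *)
Definition rho (W : {set T}) : T -> R := fun i => if i \in W then 1 else 0.

Definition order_polytope (x : T -> R) : Prop :=
  (forall i, 0 <= x i <= 1) /\ (forall i j, (i <= j)%O -> x j <= x i).

Definition chain_polytope (x : T -> R) : Prop :=
  (forall i, 0 <= x i) /\
  (forall C : {set T}, is_chain C -> \sum_(i in C) x i <= 1).

Definition segment (u v : T -> R) (x : T -> R) : Prop :=
  exists t : R, 0 <= t <= 1 /\ x = (fun i => (1 - t) * u i + t * v i).

(* conv{u,v} is an edge of the polytope Q: u <> v and conv{u,v} is a face,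
   i.e. the intersection of Q with a supporting hyperplane *)
Definition is_edge (Q : (T -> R) -> Prop) (u v : T -> R) : Prop :=
  u <> v /\
  exists (c : T -> R) (b : R),
    (forall x, Q x -> \sum_i c i * x i <= b) /\
    (forall x, (Q x /\ \sum_i c i * x i = b) <-> segment u v x).

Definition EstarO (I J : {set T}) : Prop :=
  [/\ is_ideal I, is_ideal J, I <> J,
      is_edge order_polytope (rho I) (rho J)
    & ~ is_edge chain_polytope (rho (maxel I)) (rho (maxel J))].

Definition EstarC (A B : {set T}) : Prop :=
  [/\ is_antichain A, is_antichain B, A <> B,
      is_edge chain_polytope (rho A) (rho B)
    & ~ is_edge order_polytope (rho (down A)) (rho (down B))].

End Polytopes.

(* Main.v *)
Require Import Defs.
From HB Require Import structures.
From mathcomp Require Import all_boot all_order all_algebra.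
From mathcomp Require Import reals.
From mathcomp Require Import ring lra.
From Stdlib Require Import FunctionalExtensionality.

Set Implicit Arguments.
Unset Strict Implicit.
Unset Printing Implicit Defensive.
Import Order.Theory GRing.Theory Num.Theory.

Section Poly.
Context {R : realType} {disp : Order.disp_t} {T : finPOrderType disp}.
Local Open Scope ring_scope.

Local Notation rh := (@rho R disp T).

Definition lin (c x : T -> R) : R := \sum_i c i * x i.

Lemma family_edge (Q : (T -> R) -> Prop) (u v : T -> R) (K : finType)
  (f : K -> T -> R) (g : K -> R) :
  u <> v ->
  (forall k x, Q x -> lin (f k) x <= g k) ->
  (forall x, (Q x /\ forall k, lin (f k) x = g k) <-> segment u v x) ->
  is_edge Q u v.
Proof.
move=> huv hval hface; split => //.
exists (fun i => \sum_k f k i), (\sum_k g k).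
have linE : forall x, \sum_i (\sum_k f k i) * x i = \sum_k lin (f k) x.
  move=> x; rewrite (eq_bigr (fun i => \sum_k f k i * x i)); last first.
    by move=> i _; rewrite mulr_suml.
  by rewrite exchange_big.
split.
  move=> x Qx; rewrite linE; apply: ler_sum => k _; exact: hval.
move=> x; rewrite linE; split.
  move=> [Qx heq]; apply/hface; split=> // k.
  have h0 : forall k, true -> 0 <= g k - lin (f k) x.
    by move=> k' _; rewrite subr_ge0 hval.
  have hs : \sum_k (g k - lin (f k) x) = 0 by rewrite sumrB heq subrr.
  have := psumr_eq0P h0 hs (i:=k) isT.
  by move/eqP; rewrite subr_eq0 => /eqP ->.
move=> hs; have [Qx ht] := proj2 (hface x) hs; split=> //.
by apply: eq_bigr => k _; exact: ht.
Qed.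

Lemma seg_left (u v : T -> R) : segment u v u.
Proof.
exists 0; split; first by rewrite lexx ler01.
by apply: functional_extensionality => i; rewrite subr0 mul1r mul0r addr0.
Qed.

Lemma seg_right (u v : T -> R) : segment u v v.
Proof.
exists 1; split; first by rewrite lexx ler01.
by apply: functional_extensionality => i; rewrite subrr mul0r add0r mul1r.
Qed.

Lemma seg_sym (u v x : T -> R) : segment u v x -> segment v u x.
Proof.
move=> [t [/andP[t0 t1] ->]]; exists (1 - t); split.
  apply/andP; split; lra.
by apply: functional_extensionality => i; ring.
Qed.

Lemma edge_sym (Q : (T -> R) -> Prop) (u v : T -> R) : is_edge Q u v -> is_edge Q v u.
Proof.
move=> [huv [c [b [h1 h2]]]]; split; first by move=> e; apply: huv.
exists c, b; split => // x; split => [/h2/seg_sym // | /seg_sym /h2 //].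
Qed.

Lemma edge_mid (Q : (T -> R) -> Prop) (u v y z : T -> R) : is_edge Q u v -> Q y -> Q z ->
  (forall i, y i + z i = u i + v i) -> segment u v y.
Proof.
move=> [_ [c [b [hv hf]]]] Qy Qz hyz.
have [Qu hu] := proj2 (hf u) (seg_left u v).
have [Qv hv'] := proj2 (hf v) (seg_right u v).
apply/hf; split => //.
have e : \sum_i c i * y i + \sum_i c i * z i = \sum_i c i * u i + \sum_i c i * v i.
  rewrite -!big_split /=; apply: eq_bigr => i _; by rewrite -!mulrDr hyz.
have := hv y Qy; have := hv z Qz. lra.
Qed.

Lemma rho_seg (U V W : {set T}) : segment (rh U) (rh V) (rh W) -> W = U \/ W = V.
Proof.
move=> [t [/andP [t0 t1] e]].
have ek : forall k, rho W k = (1 - t) * rho U k + t * rho V k by move=> k; rewrite e.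
case: (boolP (W == U)) => [/eqP-> | nWU]; first by left.
case: (boolP (W == V)) => [/eqP-> | nWV]; first by right.
exfalso.
have [k1 hk1] : exists k, (k \in W) != (k \in U).
  apply/existsP; apply: contraNT nWU => /existsPn h; apply/eqP/setP => k.
  by apply/eqP; exact/negbNE/h.
have [k2 hk2] : exists k, (k \in W) != (k \in V).
  apply/existsP; apply: contraNT nWV => /existsPn h; apply/eqP/setP => k.
  by apply/eqP; exact/negbNE/h.
have tt1 : t = 1.
  move: (ek k1) hk1; rewrite /rho; case: (k1 \in W); case: (k1 \in U); case: (k1 \in V) => /= h hk; try lra; by [].
have tt0 : t = 0.
  move: (ek k2) hk2; rewrite /rho; case: (k2 \in W); case: (k2 \in U); case: (k2 \in V) => /= h hk; try lra; by [].
lra.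
Qed.

Lemma rho_inj (U V : {set T}) : rh U = rh V -> U = V.
Proof.
move=> e; apply/setP => k; have := congr1 (fun f : T -> R => f k) e; rewrite /rho.
by case: (k \in U); case: (k \in V) => //= /eqP; rewrite ?oner_eq0 // eq_sym oner_eq0.
Qed.

Lemma rho_ideal_O (I : {set T}) : is_ideal I -> order_polytope (rh I).
Proof.
move=> hI; split => [i|i j hij]; rewrite /rho.
  by case: (i \in I); rewrite ?lexx ?ler01.
case: (boolP (j \in I)) => hj; first by rewrite (hI _ _ hj hij) lexx.
by case: (i \in I); rewrite ?ler01 ?lexx.
Qed.

Lemma rho_anti_C (A : {set T}) : is_antichain A -> chain_polytope (rh A).
Proof.
move=> hA; split => [i|C hC]; first by rewrite /rho; case: ifP => _; rewrite ?ler01 ?lexx.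
rewrite /rho -big_mkcondr /= sumr_const.
have : (#|(fun i : T => (i \in C) && (i \in A))| <= 1)%N.
  apply/card_le1_eqP => x y; rewrite /in_mem /= => /andP[xC xA] /andP[yC yA].
  case: (comparable_leP (hC x y xC yC)) => h; first exact/esym/hA.
  apply: hA => //; exact: ltW.
rewrite leq_eqVlt ltnS leqn0 => /orP[/eqP->|/eqP->]; by rewrite ?mulr0n ?mulr1n ?ler01 ?lexx.
Qed.

Lemma O_convex (u v x : T -> R) : order_polytope u -> order_polytope v -> segment u v x ->
  order_polytope x.
Proof.
move=> [u1 u2] [v1 v2] [t [/andP[t0 t1] ->]]; split => [i|i j hij].
  have /andP[? ?] := u1 i; have /andP[? ?] := v1 i; apply/andP; split; nra.
have := u2 i j hij; have := v2 i j hij; nra.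
Qed.

Lemma C_convex (u v x : T -> R) : chain_polytope u -> chain_polytope v -> segment u v x ->
  chain_polytope x.
Proof.
move=> [u1 u2] [v1 v2] [t [/andP[t0 t1] ->]]; split => [i|C hC].
  have := u1 i; have := v1 i; nra.
rewrite big_split /= -!mulr_sumr.
have := u2 C hC; have := v2 C hC; nra.
Qed.

Definition delta (i : T) : T -> R := fun m => if m == i then 1 else 0.

Lemma lin_delta i x : lin (delta i) x = x i.
Proof.
rewrite /lin (bigD1 i) //= /delta eqxx mul1r big1 ?addr0 // => m /negbTE ->.
by rewrite mul0r.
Qed.

Lemma lin0 x : lin (fun _ => 0) x = 0.
Proof. by rewrite /lin big1 // => m _; rewrite mul0r. Qed.

Lemma linN c x : lin (fun m => - c m) x = - lin c x.
Proof. by rewrite /lin -sumrN; apply: eq_bigr => m _; rewrite mulNr. Qed.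

Lemma linB c d x : lin (fun m => c m - d m) x = lin c x - lin d x.
Proof. by rewrite /lin -sumrB; apply: eq_bigr => m _; rewrite mulrBl. Qed.

Lemma linD c d x : lin (fun m => c m + d m) x = lin c x + lin d x.
Proof. by rewrite /lin -big_split; apply: eq_bigr => m _; rewrite mulrDl. Qed.

Lemma connect_const (U : eqType) (D : {set T}) (h : T -> U) :
  (forall p q, p \in D -> q \in D -> (p >=< q)%O -> h p = h q) ->
  forall a b, connect (comp_rel D) a b -> h a = h b.
Proof.
move=> H a b cab.
have cl : closed (comp_rel D) [pred y | h y == h a].
  move=> u v /and3P[hu hv huv]; rewrite !inE; by rewrite (H u v hu hv huv).
by have := closed_connect cl cab; rewrite !inE eqxx => /esym/eqP.
Qed.

Lemma O_edge_suff (I J : {set T}) : is_ideal I -> is_ideal J -> I \subset J ->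
  I != J -> connected_in (J :\: I) -> is_edge order_polytope (rh I) (rh J).
Proof.
move=> hI hJ sIJ nIJ [nD cD].
pose D := J :\: I.
pose f (k : (T + T) + (T * T)%type) : T -> R := match k with
  | inl (inl i) => if i \in I then delta i else (fun _ => 0)
  | inl (inr j) => if j \notin J then (fun m => - delta j m) else (fun _ => 0)
  | inr (p, q) => if [&& p \in D, q \in D & (p <= q)%O]
                  then (fun m => delta q m - delta p m) else (fun _ => 0) end.
pose g (k : (T + T) + (T * T)%type) : R :=
  match k with inl (inl i) => if i \in I then 1 else 0 | _ => 0 end.
apply: (@family_edge _ _ _ _ f g).
- by move/rho_inj/eqP; rewrite (negbTE nIJ).
- move=> [[i|j]|[p q]] x [hx1 hx2] /=.
  + case: ifP => _; rewrite ?lin_delta ?lin0 //; by have /andP[] := hx1 i.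
  + case: ifP => _; rewrite ?linN ?lin_delta ?lin0 // oppr_le0; by have /andP[] := hx1 j.
  + case: ifP => [/and3P[_ _ hpq]|_]; rewrite ?linB ?lin_delta ?lin0 // subr_le0.
    exact: hx2.
- move=> x; split.
  + move=> [Ox ht].
    have xI : forall i, i \in I -> x i = 1.
      by move=> i hi; have := ht (inl (inl i)); rewrite /= hi lin_delta.
    have xJ : forall j, j \notin J -> x j = 0.
      move=> j hj; have := ht (inl (inr j)); rewrite /= hj linN lin_delta.
      by move/eqP; rewrite oppr_eq0 => /eqP.
    have xD : forall p q, p \in D -> q \in D -> (p >=< q)%O -> x p = x q.
      move=> p q hp hq hc; case: (comparable_leP hc) => hpq.
        have := ht (inr (p, q)); rewrite /= hp hq hpq linB !lin_delta.
        by move/eqP; rewrite subr_eq0 => /eqP ->.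
      have := ht (inr (q, p)); rewrite /= hp hq (ltW hpq) linB !lin_delta.
      by move/eqP; rewrite subr_eq0 => /eqP ->.
    have /set0Pn [d0 hd0] := nD.
    have xc : forall d, d \in D -> x d = x d0.
      by move=> d hd; apply/esym; apply: (connect_const xD); apply: cD.
    exists (x d0); split; first by have := proj1 Ox d0.
    apply: functional_extensionality => i; rewrite /rho.
    case: (boolP (i \in I)) => hi.
      by rewrite (subsetP sIJ _ hi) xI //; ring.
    case: (boolP (i \in J)) => hj.
      by rewrite xc ?inE ?hi ?hj //; ring.
    by rewrite xJ //; ring.
  + move=> hs; split; first exact: O_convex (rho_ideal_O hI) (rho_ideal_O hJ) hs.
    move: hs => [t [ht ->]] [[i|j]|[p q]] /=.
    * case: ifP => hi; rewrite ?lin_delta ?lin0 // /rho hi (subsetP sIJ _ hi); ring.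
    * case: ifP => hj; rewrite ?linN ?lin_delta ?lin0 // /rho (negbTE hj).
      have -> : (j \in I) = false by apply/negbTE; apply: contra hj; apply/subsetP.
      ring.
    * case: ifP => [/and3P[hp hq _]|_]; rewrite ?linB ?lin_delta ?lin0 //.
      move: hp hq; rewrite /D /rho !inE => /andP[/negbTE -> ->] /andP[/negbTE -> ->].
      ring.
Qed.

Lemma ideal_setI (I J : {set T}) : is_ideal I -> is_ideal J -> is_ideal (I :&: J).
Proof.
move=> hI hJ x y; rewrite !inE => /andP[yI yJ] hxy.
by rewrite (hI _ _ yI hxy) (hJ _ _ yJ hxy).
Qed.

Lemma ideal_setU (I J : {set T}) : is_ideal I -> is_ideal J -> is_ideal (I :|: J).
Proof.
move=> hI hJ x y; rewrite !inE => /orP[yI|yJ] hxy.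
  by rewrite (hI _ _ yI hxy).
by rewrite (hJ _ _ yJ hxy) orbT.
Qed.

Lemma O_edge_sub (I J : {set T}) : is_ideal I -> is_ideal J ->
  is_edge order_polytope (rh I) (rh J) -> I \subset J \/ J \subset I.
Proof.
move=> hI hJ hE.
have := edge_mid hE (rho_ideal_O (ideal_setI hI hJ)) (rho_ideal_O (ideal_setU hI hJ)).
case/(_ _)/rho_seg.
  move=> i; rewrite /rho !inE.
  by case: (i \in I); case: (i \in J); rewrite /= ?addr0 ?add0r.
  by move/setIidPl; left.
by move/setIidPr; right.
Qed.

Lemma O_edge_conn (I J : {set T}) : is_ideal I -> is_ideal J -> I \subset J ->
  is_edge order_polytope (rh I) (rh J) -> connected_in (J :\: I).
Proof.
move=> hI hJ sIJ hE; split.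
  apply/negP; rewrite setD_eq0 => sJI; apply: (proj1 hE).
  by have -> : I = J by apply/eqP; rewrite eqEsubset sIJ.
move=> x y hx hy; apply: contraT => ncon.
pose D := J :\: I.
pose D1 := [set z in D | connect (comp_rel D) x z].
pose D2 := D :\: D1.
have hY : is_ideal (I :|: D1).
  move=> u w; rewrite in_setU in_set => /orP[wI|/andP[wD cw]] huw.
    by rewrite in_setU (hI _ _ wI huw).
  rewrite in_setU.
  have uJ : u \in J by apply: (hJ _ w) => //; move: wD; rewrite inE => /andP[].
  case: (boolP (u \in I)) => //= uI.
  have uD : u \in D by rewrite inE uI uJ.
  rewrite /D1 in_set uD /=; apply: (connect_trans cw); apply: connect1.
  by rewrite /comp_rel wD uD /= comparable_sym le_comparable.
have hZ : is_ideal (I :|: D2).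
  move=> u w; rewrite in_setU in_setD => /orP[wI|/andP[nw1 wD]] huw.
    by rewrite in_setU (hI _ _ wI huw).
  rewrite in_setU.
  have uJ : u \in J by apply: (hJ _ w) => //; move: wD; rewrite inE => /andP[].
  case: (boolP (u \in I)) => //= uI.
  have uD : u \in D by rewrite inE uI uJ.
  rewrite /D2 in_setD uD andbT; apply: contra nw1; rewrite /D1 !in_set => /andP[_ cu].
  apply/andP; split; first by move: wD; rewrite inE. apply: (connect_trans cu); apply: connect1.
  by rewrite /comp_rel wD uD /= le_comparable.
have := edge_mid hE (rho_ideal_O hY) (rho_ideal_O hZ).
case/(_ _)/rho_seg.
- move=> i; move: (subsetP sIJ i); rewrite /rho !inE.
  case: (i \in I); case: (i \in J); case: (connect (comp_rel D) x i) => //= h;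
    rewrite ?addr0 ?add0r //; by have := h isT.
- move/setP/(_ x); rewrite !inE connect0 andbT => e.
  by move: hx; rewrite inE => /andP[/negbTE xI xJ]; move: e; rewrite xI xJ.
- move/setP/(_ y); rewrite !inE => e.
  move: hy; rewrite inE => /andP[yI yJ]; move: e; rewrite yJ (negbTE yI) /=.
  by rewrite (negbTE ncon).
Qed.

Lemma anti_sub (A B : {set T}) : is_antichain A -> B \subset A -> is_antichain B.
Proof. by move=> hA sBA x y hx hy; apply: hA; apply: (subsetP sBA). Qed.

Lemma C_not_edge (A B : {set T}) x : is_antichain A -> x \in A -> x \notin B ->
  is_antichain (x |: B) -> A :\ x != B -> ~ is_edge chain_polytope (rh A) (rh B).
Proof.
move=> hA xA xB hxB nAB hE.
have hA' : is_antichain (A :\ x) by apply: (anti_sub hA); apply: subD1set.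
have := edge_mid hE (rho_anti_C hA') (rho_anti_C hxB).
case/(_ _)/rho_seg.
- move=> i; rewrite /rho !inE; case: (eqVneq i x) => [->|] /=.
    by rewrite xA (negbTE xB) addr0 add0r.
  by rewrite /=; case: (i \in A); case: (i \in B); rewrite ?addr0 ?add0r.
- by move/setP/(_ x); rewrite !inE eqxx xA.
- by move/eqP; rewrite (negbTE nAB).
Qed.

Lemma is_chain1 (a : T) : is_chain [set a].
Proof. by move=> x y; rewrite !inE => /eqP-> /eqP->; exact: comparablexx. Qed.

Lemma C_edge1 (A : {set T}) x : is_antichain A -> is_antichain (x |: A) ->
  x \notin A -> is_edge chain_polytope (rh A) (rh (x |: A)).
Proof.
move=> hA hxA xA.
pose f (k : (T + T)%type) : T -> R := match k with
  | inl a => if a \in A then delta a else (fun _ => 0)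
  | inr p => if p \notin x |: A then (fun m => - delta p m) else (fun _ => 0) end.
pose g (k : (T + T)%type) : R := match k with inl a => if a \in A then 1 else 0 | _ => 0 end.
have C1 : forall (y : T -> R) (a : T), chain_polytope y -> y a <= 1.
  by move=> y a [_ h]; have := h [set a] (@is_chain1 a); rewrite big_set1.
apply: (@family_edge _ _ _ _ f g).
- move/rho_inj/setP/(_ x); rewrite !inE eqxx /=; by rewrite (negbTE xA).
- move=> [a|p] y hy /=.
  + by case: ifP => _; rewrite ?lin_delta ?lin0 //; apply: C1.
  + by case: ifP => _; rewrite ?linN ?lin_delta ?lin0 // oppr_le0; case: hy.
- move=> y; split.
  + move=> [Cy ht].
    have yA : forall a, a \in A -> y a = 1.
      by move=> a ha; have := ht (inl a); rewrite /= ha lin_delta.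
    have yB : forall p, p \notin x |: A -> y p = 0.
      move=> p hp; have := ht (inr p); rewrite /= hp linN lin_delta.
      by move/eqP; rewrite oppr_eq0 => /eqP.
    exists (y x); split; first by rewrite (C1 _ _ Cy) andbT; case: Cy.
    apply: functional_extensionality => i; rewrite /rho !inE.
    case: (eqVneq i x) => [->|nix] /=; first by rewrite (negbTE xA); ring.
    case: (boolP (i \in A)) => hi; first by rewrite yA //; ring.
    by rewrite yB ?inE ?(negbTE nix) ?(negbTE hi) //; ring.
  + move=> hs; split; first exact: C_convex (rho_anti_C hA) (rho_anti_C hxA) hs.
    move: hs => [t [ht ->]] [a|p] /=.
    * case: ifP => ha; rewrite ?lin_delta ?lin0 // /rho ha inE ha orbT; ring.
    * case: ifP => hp; rewrite ?linN ?lin_delta ?lin0 // /rho (negbTE hp).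
      have -> : (p \in A) = false by apply/negbTE; apply: contra hp => hp; rewrite inE hp orbT.
      ring.
Qed.

Lemma C_edge2 (A B : {set T}) : is_antichain A -> is_antichain B ->
  A != set0 -> B != set0 -> (forall a b, a \in A -> b \in B -> (a < b)%O) ->
  is_edge chain_polytope (rh A) (rh B).
Proof.
move=> hA hB /set0Pn[a0 ha0] /set0Pn[b0 hb0] hlt.
have AnB : forall a, a \in A -> a \notin B.
  by move=> a ha; apply/negP => hb; have := hlt a a ha hb; rewrite ltxx.
have BnA : forall b, b \in B -> b \notin A.
  by move=> b hb; apply/negP => ha; have := hlt b b ha hb; rewrite ltxx.
pose f (k : (T + (T * T))%type) : T -> R := match k with
  | inl p => if p \notin A :|: B then (fun m => - delta p m) else (fun _ => 0)
  | inr (a, b) => if (a \in A) && (b \in B) then (fun m => delta a m + delta b m)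
                  else (fun _ => 0) end.
pose g (k : (T + (T * T))%type) : R := match k with
  | inr (a, b) => if (a \in A) && (b \in B) then 1 else 0 | _ => 0 end.
have C2 : forall (y : T -> R) (a b : T), chain_polytope y -> a \in A -> b \in B -> y a + y b <= 1.
  move=> y a b [_ h] ha hb.
  have hc : is_chain [set a; b].
    move=> u v; rewrite !inE => /orP[]/eqP-> /orP[]/eqP->; rewrite ?comparablexx //.
      by rewrite le_comparable // ltW // hlt.
    by rewrite comparable_sym le_comparable // ltW // hlt.
  have := h _ hc; rewrite big_setU1 ?big_set1 //= inE.
  by apply/negP => /eqP e; subst; have := AnB _ ha; rewrite hb.
apply: (@family_edge _ _ _ _ f g).
- move/rho_inj/setP/(_ a0); rewrite ha0.
  by move=> e; have := AnB _ ha0; rewrite -e.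
- move=> [p|[a b]] y hy /=.
  + by case: ifP => _; rewrite ?linN ?lin_delta ?lin0 // oppr_le0; case: hy.
  + case: ifP => [/andP[ha hb]|_]; rewrite ?linD ?lin_delta ?lin0 //; exact: C2.
- move=> y; split.
  + move=> [Cy ht].
    have yAB : forall a b, a \in A -> b \in B -> y a + y b = 1.
      by move=> a b ha hb; have := ht (inr (a, b)); rewrite /= ha hb linD !lin_delta.
    have y0 : forall p, p \notin A :|: B -> y p = 0.
      move=> p hp; have := ht (inl p); rewrite /= hp linN lin_delta.
      by move/eqP; rewrite oppr_eq0 => /eqP.
    exists (y b0); split.
      have := yAB _ _ ha0 hb0; case: Cy => h _; have := h a0; have := h b0.
      move=> ? ? ?; apply/andP; split; lra.
    apply: functional_extensionality => i; rewrite /rho.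
    case: (boolP (i \in A)) => hi.
      rewrite (negbTE (AnB _ hi)); have := yAB _ _ hi hb0; lra.
    case: (boolP (i \in B)) => hj.
      have := yAB _ _ ha0 hj; have := yAB _ _ ha0 hb0; lra.
    by rewrite y0 ?inE ?(negbTE hi) ?(negbTE hj) //; ring.
  + move=> hs; split; first exact: C_convex (rho_anti_C hA) (rho_anti_C hB) hs.
    move: hs => [t [ht ->]] [p|[a b]] /=.
    * case: ifP => hp; rewrite ?linN ?lin_delta ?lin0 //.
      move: hp; rewrite /rho !inE negb_or => /andP[/negbTE-> /negbTE->]; ring.
    * case: ifP => [/andP[ha hb]|_]; rewrite ?linD ?lin_delta ?lin0 //.
      rewrite /rho ha hb (negbTE (AnB _ ha)) (negbTE (BnA _ hb)); ring.
Qed.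

End Poly.

Section Rank.
Context {disp : Order.disp_t} {T : finPOrderType disp}.
Context (n : nat) (hP : @max_ranked disp T n).

Definition chP (x : T) (C : {set T}) := chainb C && [forall y in C, (y <= x)%O].

Lemma chainbP (C : {set T}) : reflect (is_chain C) (chainb C).
Proof.
apply: (iffP forall_inP) => [h x y hx hy | h x hx].
  exact: (forall_inP (h x hx) y hy).
by apply/forall_inP => y hy; exact: h.
Qed.

Lemma chP1 (x : T) : chP x [set x].
Proof.
apply/andP; split; first by apply/chainbP => u v; rewrite !inE => /eqP-> /eqP->; exact: comparablexx.
by apply/forall_inP => y; rewrite inE => /eqP->.
Qed.

Lemma rank_spec (x : T) : (exists2 C, chP x C & #|C| = (rank x).+1) /\
  (forall C, chP x C -> #|C| <= (rank x).+1).
Proof.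
have hM : forall C, chP x C -> #|C| <= \max_(C | chP x C) #|C|.
  by move=> C hC; apply: leq_bigmax_cond.
case: (arg_maxnP (fun C : {set T} => #|C|) (chP1 x)) => C hC hmax.
have e : \max_(C | chP x C) #|C| = #|C|.
  apply/eqP; rewrite eqn_leq hM // andbT; apply/bigmax_leqP => D hD; exact: hmax.
have pos : 0 < #|C| by apply: leq_trans (hmax _ (chP1 x)); rewrite cards1.
have er : (rank x).+1 = #|C| by rewrite /rank /chP in e *; rewrite e prednK.
split; first by exists C.
by move=> D hD; rewrite er -e; apply: hM.
Qed.

Lemma lt_rank (x y : T) : (x < y)%O -> rank x < rank y.
Proof.
move=> hxy; have [[C hC eC] _] := rank_spec x.
have [_ hy] := rank_spec y.
have hCx : forall c, c \in C -> (c <= x)%O by move=> c; move: hC => /andP[_ /forall_inP]; apply.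
have yC : y \notin C by apply/negP => /hCx; rewrite lt_geF.
have : chP y (y |: C).
  apply/andP; split.
    apply/chainbP => u v; rewrite !in_setU1 => /orP[/eqP->|hu] /orP[/eqP->|hv].
    - exact: comparablexx.
    - by rewrite comparable_sym le_comparable // (le_trans (hCx _ hv)) // ltW.
    - by rewrite le_comparable // (le_trans (hCx _ hu)) // ltW.
    - by move: hC => /andP[/chainbP hc _]; apply: hc.
  apply/forall_inP => u; rewrite in_setU1 => /orP[/eqP->//|hu].
  by rewrite (le_trans (hCx _ hu)) // ltW.
move/hy; rewrite cardsU1 yC eC add1n.
by rewrite ltnS.
Qed.

Lemma le_rank (x y : T) : (x <= y)%O = (x == y) || (rank x < rank y).
Proof.
apply/idP/idP.
  by rewrite le_eqVlt => /orP[->//|/lt_rank ->]; rewrite orbT.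
case/orP => [/eqP->//|h].
have hc : (x >=< y)%O by apply: (proj2 hP); rewrite neq_ltn h.
case: (comparable_leP hc) => // hyx.
by have := lt_rank hyx; rewrite ltnNge (ltnW h).
Qed.

Lemma comp_rank (x y : T) : (x >=< y)%O = (x == y) || (rank x != rank y).
Proof.
rewrite /Order.comparable !le_rank [y == x]eq_sym.
case: (eqVneq x y) => //= _; by rewrite neq_ltn orbC.
Qed.

Lemma ext_max (C : {set T}) : is_chain C -> exists2 M, is_max_chain M & C \subset M.
Proof.
move=> hC; have hC0 : chainb C && (C \subset C) by rewrite subxx andbT; apply/chainbP.
case: (@arg_maxnP _ C (fun D : {set T} => chainb D && (C \subset D)) (fun D : {set T} => #|D|) hC0) => M /andP[hM sCM] hmax.
exists M => //; split; first exact/chainbP.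
move=> D hD sMD; apply/eqP; rewrite eq_sym eqEcard sMD /=.
by apply: hmax; rewrite (subset_trans sCM sMD) andbT; apply/chainbP.
Qed.

Lemma rank_le_n (x : T) : rank x <= n.
Proof.
have [[C hC eC] _] := rank_spec x.
have [M hM sCM] := ext_max (elimT (chainbP C) (proj1 (andP hC))).
have := subset_leq_card sCM; rewrite eC (proj1 hP M hM) ltnS; exact.
Qed.

Lemma rank_exists (b : T) k : k <= rank b -> exists z : T, rank z = k.
Proof.
move=> hk; have [[C hC eC] _] := rank_spec b.
move: hC => /andP[/chainbP hch /forall_inP hCb].
have hu : uniq (map rank (enum C)).
  rewrite map_inj_in_uniq ?enum_uniq // => c1 c2; rewrite !mem_enum => h1 h2 e.
  case: (comparable_leP (hch c1 c2 h1 h2)) => h.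
    by move: h; rewrite le_rank e ltnn orbF => /eqP.
  by move: (ltW h); rewrite le_rank e ltnn orbF => /eqP.
have hs : {subset map rank (enum C) <= iota 0 (rank b).+1}.
  move=> r /mapP[c]; rewrite mem_enum => hc ->; rewrite mem_iota /= add0n ltnS.
  by have := hCb c hc; rewrite le_rank => /orP[/eqP->//|/ltnW].
have hsz : size (iota 0 (rank b).+1) <= size (map rank (enum C)).
  by rewrite size_map -cardE eC size_iota.
have [_ eqs] := uniq_min_size hu hs hsz.
have : k \in iota 0 (rank b).+1 by rewrite mem_iota add0n ltnS.
by rewrite -eqs => /mapP[z _ ->]; exists z.
Qed.

Lemma anti_rank (A : {set T}) a a' : is_antichain A -> a \in A -> a' \in A ->
  rank a = rank a'.
Proof.
move=> hA ha ha'; apply/eqP; apply: contraT => ne.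
case: (comparable_leP (proj2 hP a a' ne)) => h.
  by have e := hA _ _ ha ha' h; subst; rewrite eqxx in ne.
by have e := hA _ _ ha' ha (ltW h); subst; rewrite eqxx in ne.
Qed.

Lemma anti_of_rank (A : {set T}) :
  (forall a a', a \in A -> a' \in A -> rank a = rank a') -> is_antichain A.
Proof.
by move=> h x y hx hy; rewrite le_rank (h x y hx hy) ltnn orbF => /eqP.
Qed.

Lemma maxel_anti (I : {set T}) : is_antichain (maxel I).
Proof.
move=> x y; rewrite !inE => /andP[xI /forall_inP hx] /andP[yI _] hxy.
by have := hx y yI; rewrite hxy => /eqP.
Qed.

Lemma ideal_struct (I : {set T}) : is_ideal I -> I != set0 -> exists r,
  [/\ forall x, (x \in maxel I) = (x \in I) && (rank x == r),
      forall x, x \in I -> rank x <= r,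
      forall x, rank x < r -> x \in I & maxel I != set0].
Proof.
move=> hI /set0Pn[x0 hx0].
case: (arg_maxnP (@rank disp T) hx0) => m hm hmax.
have low : forall x, rank x < rank m -> x \in I.
  by move=> x hx; apply: (hI _ m hm); rewrite le_rank hx orbT.
have hmx : forall x, (x \in maxel I) = (x \in I) && (rank x == rank m).
  move=> x; rewrite inE; apply/andP/andP => [[xI /forall_inP hx]|[xI /eqP rx]].
    split=> //; rewrite eqn_leq (hmax x xI : rank x <= rank m) /= leqNgt; apply/negP => lt.
    have := hx m hm; rewrite le_rank lt orbT /= => /eqP e; subst.
    by rewrite ltnn in lt.
  split=> //; apply/forall_inP => y yI; apply/implyP; rewrite le_rank => /orP[/eqP->//|lt].
  by have := (hmax y yI : rank y <= rank m); rewrite leqNgt -rx lt.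
exists (rank m); split => //.
by apply/set0Pn; exists m; rewrite hmx eqxx andbT.
Qed.

End Rank.

Section Main.
Context {R : realType} {disp : Order.disp_t} {T : finPOrderType disp}.
Context (n : nat) (hP : @max_ranked disp T n).
Local Notation rh := (@rho R disp T).
Local Notation EO := (@EstarO R disp T).
Local Notation EC := (@EstarC R disp T).

Lemma EO_sym (I J : {set T}) : EO I J -> EO J I.
Proof.
case=> hI hJ nIJ hE hN; split => //; first by move=> e; apply: nIJ.
  exact: edge_sym.
by move/edge_sym.
Qed.

Lemma EC_sym (A B : {set T}) : EC A B -> EC B A.
Proof.
case=> hA hB nAB hE hN; split => //; first by move=> e; apply: nAB.
  exact: edge_sym.
by move/edge_sym.
Qed.

Lemma comp_rel_sym (D : {set T}) : connect_sym (comp_rel D).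
Proof.
apply: sym_connect_sym => x y; rewrite /comp_rel comparable_sym.
by case: (x \in D); case: (y \in D).
Qed.

Lemma hub_conn (D : {set T}) h : h \in D ->
  (forall x, x \in D -> connect (comp_rel D) h x) -> connected_in D.
Proof.
move=> hD H; split; first by apply/set0Pn; exists h.
move=> x y hx hy; apply: (connect_trans (y := h)); last exact: H.
by rewrite comp_rel_sym; apply: H.
Qed.

Lemma down_ideal (A : {set T}) : is_ideal (down A).
Proof.
move=> x y; rewrite !inE => /existsP[z /andP[zA hyz]] hxy.
by apply/existsP; exists z; rewrite zA (le_trans hxy hyz).
Qed.

Lemma downE (A : {set T}) a : is_antichain A -> a \in A ->
  forall y, (y \in down A) = (y \in A) || (rank y < rank a).
Proof.
move=> hA ha y; rewrite inE; apply/existsP/idP => [[z /andP[zA]]|].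
  rewrite (le_rank hP) => /orP[/eqP->|]; first by rewrite zA.
  by rewrite (anti_rank hP hA zA ha) => ->; rewrite orbT.
case/orP => [yA|lt]; first by exists y; rewrite yA lexx.
by exists a; rewrite ha (le_rank hP) lt orbT.
Qed.

Lemma down0 : down (set0 : {set T}) = set0.
Proof. by apply/setP => y; rewrite !inE; apply/existsP => [[z]]; rewrite inE. Qed.

Lemma maxel0 : maxel (set0 : {set T}) = set0.
Proof. by apply/setP => y; rewrite !inE. Qed.

Lemma ideal0 : is_ideal (set0 : {set T}).
Proof. by move=> x y; rewrite inE. Qed.

Lemma anti0 : is_antichain (set0 : {set T}).
Proof. by move=> x y; rewrite inE. Qed.

Lemma partb_same1 (A B : {set T}) x : is_antichain A -> is_antichain B ->
  x \in A -> x \notin B ->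
  (forall u v, u \in A :|: B -> v \in A :|: B -> rank u = rank v) ->
  is_edge chain_polytope (rh A) (rh B) ->
  ~ is_edge order_polytope (rh (down A)) (rh (down B)) -> False.
Proof.
move=> hA hB xA xB hr hCE hnOE.
case: (eqVneq (A :\ x) B) => e; last first.
  apply: (C_not_edge hA xA xB _ e hCE); apply: (anti_of_rank hP) => u v.
  rewrite !in_setU1 => /orP[/eqP->|hu] /orP[/eqP->|hv] //; apply: hr;
    by rewrite !inE ?xA ?hu ?hv ?orbT.
have BA : B \subset A by rewrite -e subD1set.
have xdB : x \notin down B.
  apply/negP; rewrite inE => /existsP[b /andP[bB]]; rewrite (le_rank hP).
  case/orP => [/eqP e'|]; first by subst; rewrite bB in xB.
  by rewrite (hr x b) ?ltnn // inE ?xA ?bB ?orbT.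
have xdA : x \in down A by rewrite inE; apply/existsP; exists x; rewrite xA lexx.
apply: hnOE; apply: edge_sym; apply: O_edge_suff.
- exact: down_ideal.
- exact: down_ideal.
- apply/subsetP => y; rewrite !inE => /existsP[b /andP[bB hyb]].
  by apply/existsP; exists b; rewrite (subsetP BA _ bB).
- by apply/eqP => e'; rewrite e' xdA in xdB.
- apply: (hub_conn (h := x)); first by rewrite inE xdB xdA.
  move=> d; rewrite inE => /andP[ndB dA]; apply: connect1.
  rewrite /comp_rel !in_setD xdB ndB xdA dA /=.
  have := dA; rewrite inE => /existsP[a /andP[aA hda]].
  case: (eqVneq a x) => [e'|nax]; first by subst; rewrite comparable_sym le_comparable.
  have aB : a \in B by rewrite -e !inE nax aA.
  by move: ndB; rewrite inE; move/existsP => []; exists a; rewrite aB hda.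
Qed.

Lemma partb_lt (A B : {set T}) a b : is_antichain A -> is_antichain B ->
  a \in A -> b \in B -> rank a < rank b ->
  is_edge chain_polytope (rh A) (rh B) ->
  ~ is_edge order_polytope (rh (down A)) (rh (down B)) ->
  exists l, 1 <= l <= n /\ A = level l.-1 /\ B \subset level l /\ 2 <= #|B|.
Proof.
move=> hA hB aA bB lt hCE hnOE.
have dA := downE hA aA; have dB := downE hB bB.
have rA : forall y, y \in A -> rank y = rank a by move=> y hy; apply: (anti_rank hP hA).
have rB : forall y, y \in B -> rank y = rank b by move=> y hy; apply: (anti_rank hP hB).
pose D := down B :\: down A.
have inD : forall y, (y \in D) = ((y \in B) || (rank y < rank b)) && ~~ ((y \in A) || (rank y < rank a)).
  by move=> y; rewrite inE dA dB andbC.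
have BD : forall y : T, y \in B -> y \in D.
  move=> y yB; rewrite inD yB /= negb_or (rB _ yB) -leqNgt (ltnW lt) andbT.
  by apply/negP => /rA e; move: lt; rewrite -e (rB _ yB) ltnn.
have bD := BD b bB.
have key : (forall d, d \in B -> connect (comp_rel D) b d) -> False.
  move=> H; apply: hnOE; apply: O_edge_suff.
  - exact: down_ideal.
  - exact: down_ideal.
  - apply/subsetP => y; rewrite dA dB => /orP[/rA ->|h]; first by rewrite lt orbT.
    by rewrite (ltn_trans h lt) orbT.
  - apply/eqP => e; move: bD; by rewrite inE e andNb.
  - apply: (hub_conn bD) => d hd.
    case: (boolP (d \in B)) => hdB; first exact: H.
    apply: connect1; rewrite /comp_rel bD hd /= (comp_rank hP).
    move: hd; rewrite inD (negbTE hdB) /= => /andP[h _].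
    by rewrite neq_ltn h !orbT.
case: (boolP [exists z, (z \in D) && (rank z < rank b)]) => [/existsP[z /andP[zD zlt]]|hnz].
  exfalso; apply: key => d hd; apply: (connect_trans (y := z)); apply: connect1.
    by rewrite /comp_rel bD zD /= (comp_rank hP) neq_ltn zlt !orbT.
  have dD := BD d hd.
  by rewrite /comp_rel zD dD /= (comp_rank hP) (rB _ hd) neq_ltn zlt !orbT.
have nz : forall z, z \in D -> rank z < rank b -> False.
  by move=> z zD zlt; move/existsP: hnz; apply; exists z; rewrite zD zlt.
case: (leqP #|B| 1) => hc.
  exfalso; apply: key => d hd.
  by have -> := card_le1_eqP hc d b hd bB; exact: connect0.
have eb : rank b = (rank a).+1.
  apply/eqP; rewrite eqn_leq lt andbT leqNgt; apply/negP => hlt.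
  have [z hz] := rank_exists hP (ltnW hlt).
  apply: (nz z); last by rewrite hz.
  rewrite inD hz hlt orbT /= negb_or ltnNge leqnSn andbT.
  by apply/negP => /rA; rewrite hz => /esym /n_Sn.
exists (rank b); split; first by rewrite (leq_ltn_trans (leq0n _) lt) (rank_le_n hP).
split.
  rewrite eb /=; apply/setP => y; rewrite inE.
  apply/idP/eqP => [/rA //|ry].
  apply: contraT => nyA; exfalso; apply: (nz y); last by rewrite ry eb.
  by rewrite inD ry eb ltnSn orbT /= negb_or (negbTE nyA) ltnn.
split=> //; apply/subsetP => y hy; by rewrite inE (rB _ hy).
Qed.


Definition ConclB (A B : {set T}) :=
  exists l, 1 <= l <= n /\ A = level l.-1 /\ B \subset level l /\ 2 <= #|B|.

Lemma partb_fwd (A B : {set T}) : EC A B -> ConclB A B \/ ConclB B A.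
Proof.
case=> hA hB nAB hCE hnOE.
case: (boolP [exists a in A, exists b in B, rank a != rank b]).
  case/exists_inP => a aA /exists_inP[b bB]; rewrite neq_ltn => /orP[lt|lt].
    by left; apply: (partb_lt hA hB aA bB lt hCE hnOE).
  right; apply: (partb_lt hB hA bB aA lt (edge_sym hCE)).
  by move/edge_sym.
move=> hsame; exfalso.
have hr : forall u v, u \in A :|: B -> v \in A :|: B -> rank u = rank v.
  have hab : forall a b, a \in A -> b \in B -> rank a = rank b.
    move=> a b aA bB; case: (eqVneq (rank a) (rank b)) => // ne.
    move/negP: hsame; case; apply/exists_inP; exists a => //.
    by apply/exists_inP; exists b.
  move=> u v; rewrite !inE => /orP[uA|uB] /orP[vA|vB].
  - exact: (anti_rank hP hA).
  - exact: hab.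
  - exact/esym/hab.
  - exact: (anti_rank hP hB).
have [x hx] : exists x, (x \in A) != (x \in B).
  case: (pickP (fun x => (x \in A) != (x \in B))) => [x hx|h]; first by exists x.
  by exfalso; apply: nAB; apply/setP => k; have := h k; move/negbT/negbNE/eqP.
move: hx; case: (boolP (x \in A)) => xA; case: (boolP (x \in B)) => xB //= _.
  by apply: (partb_same1 hA hB xA xB hr hCE hnOE).
apply: (partb_same1 hB hA xB xA _ (edge_sym hCE)).
  by move=> u v hu hv; apply: hr; rewrite setUC.
by move/edge_sym.
Qed.

Lemma partb_bwd (A B : {set T}) : is_antichain A -> is_antichain B -> A <> B ->
  ConclB A B -> EC A B.
Proof.
move=> hA hB nAB [l [/andP[l1 ln] [eA [sB cB]]]].
have [b1 [b2 [b1B b2B nb]]] : exists b1 b2, [/\ b1 \in B, b2 \in B & b1 != b2].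
  by apply/card_gt1P.
have rB : forall b, b \in B -> rank b = l.
  by move=> b hb; have := subsetP sB _ hb; rewrite inE => /eqP.
have [a0 ha0] := rank_exists hP (leq_pred (rank b1)).
have a0A : a0 \in A by rewrite eA inE ha0 (rB _ b1B).
have rA : forall a, a \in A -> rank a = l.-1 by move=> a; rewrite eA inE => /eqP.
have ltl : l.-1 < l by rewrite prednK.
split => //.
  apply: C_edge2 => //.
  - by apply/set0Pn; exists a0.
  - by apply/set0Pn; exists b1.
  - move=> a b aA bB; rewrite lt_neqAle (le_rank hP) rA // rB // ltl orbT andbT.
    by apply/eqP => e; subst; move: ltl; rewrite -(rA _ aA) (rB _ bB) ltnn.
have hdA : forall y, (y \in down A) = (rank y < l).
  move=> y; rewrite (downE hA a0A) ha0 (rB _ b1B) eA inE.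
  case: (ltngtP (rank y) l.-1) => [h|h|->] /=; first by rewrite (ltn_trans h ltl).
    by rewrite prednK // in h; rewrite ltnNge h.
  by apply/esym; exact: ltl.
have hdB : forall y, (y \in down B) = (y \in B) || (rank y < l).
  by move=> y; rewrite (downE hB b1B) (rB _ b1B).
move=> hE.
pose Y := down A :|: [set b1].
pose Z := down A :|: (B :\ b1).
have hY : is_ideal Y.
  move=> u w; rewrite !in_setU ?in_set1 ?in_setD1 !hdA (le_rank hP) => /orP[h|/eqP->] /orP[/eqP->|h'].
  - by rewrite h.
  - by rewrite (ltn_trans h' h).
  - by rewrite eqxx orbT.
  - by rewrite (rB _ b1B) in h'; rewrite h'.
have hZ : is_ideal Z.
  move=> u w; rewrite !in_setU ?in_set1 ?in_setD1 !hdA (le_rank hP) => /orP[h|/andP[nwb wB]] /orP[/eqP->|h'].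
  - by rewrite h.
  - by rewrite (ltn_trans h' h).
  - by rewrite nwb wB orbT.
  - by rewrite (rB _ wB) in h'; rewrite h'.
have := edge_mid hE (rho_ideal_O hY) (rho_ideal_O hZ).
case/(_ _)/rho_seg.
- move=> y; rewrite /rho !in_setU ?in_set1 ?in_setD1 !hdA hdB.
  case: (eqVneq y b1) => [->|nyb] /=; first by rewrite (rB _ b1B) ltnn b1B /= addr0 add0r.
  case: (rank y < l) => /=; rewrite ?orbT //.
  by case: (y \in B); rewrite /= ?addr0 ?add0r.
- move/setP/(_ b1); rewrite !in_setU ?in_set1 ?in_setD1 !hdA (rB _ b1B) ltnn eqxx.
  done.
- move/setP/(_ b2); rewrite !in_setU ?in_set1 ?in_setD1 !hdA hdB (rB _ b2B) ltnn b2B /=.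
  by rewrite eq_sym (negbTE nb).
Qed.

Lemma parta_fwd (I J : {set T}) : is_ideal I -> is_ideal J -> I \subset J ->
  connected_in (J :\: I) -> I <> J ->
  ~ is_edge chain_polytope (rh (maxel I)) (rh (maxel J)) ->
  I = set0 /\ connected_in J /\ 2 <= #|maxel J|.
Proof.
move=> hI hJ sIJ hc nIJ hnCE.
case: (eqVneq I set0) => [I0|nI0].
  subst; rewrite setD0 in hc; split=> //; split=> //.
  rewrite ltnNge; apply/negP => hle.
  have nJ0 : J != set0 by apply/eqP => e; apply: nIJ.
  have [r [hm _ _ nm0]] := ideal_struct hP hJ nJ0.
  have [m hm'] := set0Pn _ nm0.
  have em : maxel J = m |: set0.
    apply/setP => y; rewrite setU0 inE; apply/idP/eqP => [hy|->//].
    exact/esym/(card_le1_eqP hle y m hy hm').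
  apply: hnCE; rewrite maxel0 em; apply: C_edge1.
  - exact: anti0.
  - by rewrite -em; exact: maxel_anti.
  - by rewrite inE.
exfalso.
have nJ0 : J != set0.
  by apply: contraNneq nI0 => e; rewrite -subset0 -e.
have [rI [hmI hleI hlowI nmI]] := ideal_struct hP hI nI0.
have [rJ [hmJ hleJ hlowJ nmJ]] := ideal_struct hP hJ nJ0.
have [mI hmI'] := set0Pn _ nmI.
have rmI : rank mI = rI by move: hmI'; rewrite hmI => /andP[_ /eqP].
have rIJ : rI <= rJ.
  by rewrite -rmI; apply: hleJ; apply: (subsetP sIJ); move: hmI'; rewrite hmI => /andP[].
move: rIJ; rewrite leq_eqVlt => /orP[/eqP e|lt]; last first.
  apply: hnCE; apply: C_edge2 => //.
  - exact: maxel_anti.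
  - exact: maxel_anti.
  - move=> a b; rewrite hmI hmJ => /andP[_ /eqP ra] /andP[_ /eqP rb].
    rewrite lt_neqAle (le_rank hP) ra rb lt orbT andbT.
    by apply/eqP => e; move: lt; rewrite -ra -rb e ltnn.
subst rJ.
case: hc => nD cD.
have [d0 hd0] := set0Pn _ nD.
have rD : forall d, d \in J :\: I -> rank d = rI.
  move=> d; rewrite inE => /andP[dI dJ]; apply/eqP; rewrite eqn_leq hleJ //=.
  by rewrite leqNgt; apply: contra dI; apply: hlowI.
have eD : forall d, d \in J :\: I -> d = d0.
  move=> d hd; apply/esym; apply: (connect_const (D := J :\: I) (h := id)); last exact: cD.
  move=> p q hp hq; rewrite (comp_rank hP) (rD _ hp) (rD _ hq) eqxx orbF.
  by move/eqP.
have d0J : d0 \in J by move: hd0; rewrite inE => /andP[].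
have d0I : d0 \notin I by move: hd0; rewrite inE => /andP[].
have em : maxel J = d0 |: maxel I.
  apply/setP => y; rewrite in_setU1 hmJ hmI.
  apply/andP/idP => [[yJ /eqP ry]|].
    case: (boolP (y \in I)) => yI; first by rewrite ry eqxx orbT.
    by rewrite (eD y) ?eqxx // inE yI yJ.
  case/orP => [/eqP->|/andP[yI ry]]; first by rewrite d0J (rD _ hd0) eqxx.
  by rewrite (subsetP sIJ _ yI) ry.
apply: hnCE; rewrite em; apply: C_edge1.
- exact: maxel_anti.
- by rewrite -em; exact: maxel_anti.
- by rewrite hmI (negbTE d0I).
Qed.

Lemma parta_bwd (I J : {set T}) : is_ideal J -> I <> J ->
  I = set0 -> connected_in J -> 2 <= #|maxel J| -> EO I J.
Proof.
move=> hJ nIJ I0 hc hcard; subst I.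
have [a1 [a2 [a1J a2J na]]] : exists a1 a2, [/\ a1 \in maxel J, a2 \in maxel J & a1 != a2].
  by apply/card_gt1P.
split => //.
- exact: ideal0.
- apply: O_edge_suff => //.
  + exact: ideal0.
  + exact: sub0set.
  + by apply/eqP.
  + by rewrite setD0.
- rewrite maxel0 => /edge_sym hE.
  apply: (C_not_edge (maxel_anti (I:=J)) a1J _ _ _ hE).
  + by rewrite inE.
  + rewrite setU0 => x y; rewrite !inE => /eqP-> /eqP-> //.
  + by apply/set0Pn; exists a2; rewrite in_setD1 a2J andbT eq_sym.
Qed.

End Main.

Theorem lemma3p1 (R : realType) (disp : Order.disp_t) (T : finPOrderType disp)
    (n : nat) (hP : @max_ranked disp T n) :
  (forall I J : {set T}, is_ideal I -> is_ideal J -> I <> J ->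
     (@EstarO R disp T I J <->
       (I = set0 /\ connected_in J /\ 2 <= #|maxel J|)
       \/ (J = set0 /\ connected_in I /\ 2 <= #|maxel I|)))
  /\
  (forall A B : {set T}, is_antichain A -> is_antichain B -> A <> B ->
     (@EstarC R disp T A B <->
       (exists l, 1 <= l <= n /\ A = level l.-1 /\ B \subset level l /\ 2 <= #|B|)
       \/ (exists l, 1 <= l <= n /\ B = level l.-1 /\ A \subset level l /\ 2 <= #|A|))).
Proof.
split.
- move=> I J hI hJ nIJ; split.
  + move=> hE; have [_ _ _ hOE hnCE] := hE.
    case: (O_edge_sub hI hJ hOE) => s.
      by left; apply: (parta_fwd hP hI hJ s (O_edge_conn hI hJ s hOE) nIJ hnCE).
    have nJI : J <> I by move=> e; apply: nIJ.
    right; apply: (parta_fwd hP hJ hI s (O_edge_conn hJ hI s (edge_sym hOE)) nJI).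
    intro h. apply: hnCE. apply: edge_sym. exact: h.
  + case=> [[I0 [hc hcard]]|[J0 [hc hcard]]].
      exact: (parta_bwd hJ nIJ I0 hc hcard).
    apply: EO_sym; apply: (parta_bwd hI _ J0 hc hcard).
    by move=> e; apply: nIJ.
- move=> A B hA hB nAB; split.
  + by move=> h; have := partb_fwd hP h; rewrite /ConclB.
  + case=> h; first exact: (partb_bwd hP hA hB nAB h).
    apply: EC_sym; apply: (partb_bwd hP hB hA _ h).
    by move=> e; apply: nAB.
Qed.
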